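(* Let $n \ge 1$. Let $H_n$ be the hypergraph whose vertex set consists of the $8n$ variable indices $(k,i)$ with $k \in \{1,\dots,n\}$ and $i \in \{1,2,3,4,5,6,A,B\}$, and whose hyperedges (scopes) are: (i) the singletons $\{(k,i)\}$ for all vertices; (ii) for each $k \in \{1,\dots,n\}$, the pairs $\{(k,1),(k,2)\}$, $\{(k,2),(k,3)\}$, $\{(k,3),(k,6)\}$, $\{(k,1),(k,4)\}$, $\{(k,4),(k,5)\}$, $\{(k,5),(k,6)\}$, $\{(k,A),(k,B)\}$, $\{(k,1),(k,B)\}$, $\{(k,2),(k,B)\}$, $\{(k,4),(k,A)\}$, $\{(k,4),(k,B)\}$, and the triples $\{(k,2),(k,A),(k,B)\}$, $\{(k,4),(k,A),(k,B)\}$; (iii) the pairs $\{(k,6),(k-1,1)\}$ for $2 \le k \le n$ and $\{(k,B),(k+1,A)\}$ for $1 \le k \le n-1$; (iv) the pair $\{(1,6),(1,A)\}$. Then the pathwidth of $H_n$ is exactly $3$.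
   Context: A path decomposition of a hypergraph $(V,\mathcal{S})$ is a sequence of subsets (bins) $X_1,\dots,X_p \subseteq V$ such that: every vertex lies in some bin; for every hyperedge $S \in \mathcal{S}$ there is $r$ with $S \subseteq X_r$; and if $v \in X_r \cap X_s$ then $v \in X_\ell$ for all $r \le \ell \le s$. Its width is $\max_r |X_r| - 1$, and the pathwidth of $(V,\mathcal{S})$ is the minimum width over all path decompositions. This hypergraph is the constraint hypergraph of the paper's ''controlled doubling construction'' with $n$ gadgets. *)

(* Defs.v *)
From mathcomp Require Import all_boot.
Set Implicit Arguments. Unset Strict Implicit. Unset Printing Implicit Defensive.

Section PathDecomposition.
Variable T : finType.

Definition bin (X : seq {set T}) (r : nat) : {set T} := nth set0 X r.

Definition is_path_decomposition (E : pred {set T}) (X : seq {set T}) : Prop :=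
  [/\
      forall v : T, exists r, r < size X /\ v \in bin X r,
      forall S : {set T}, E S -> exists r, r < size X /\ S \subset bin X r
    &
      forall (v : T) (r s l : nat), r <= l -> l <= s -> s < size X ->
        v \in bin X r -> v \in bin X s -> v \in bin X l].

Definition pd_width (X : seq {set T}) : nat := (\max_(B <- X) #|B|).-1.

Definition is_pathwidth (E : pred {set T}) (p : nat) : Prop :=
  (exists X, is_path_decomposition E X /\ pd_width X = p) /\
  (forall X, is_path_decomposition E X -> p <= pd_width X).
End PathDecomposition.

(** * The hypergraph H_n.  Vertex (k,i) with k in {1..n}, i in {1..6,A,B}
    is encoded as (k-1, j) : 'I_n * 'I_8 where labels 1..6 map to j = 0..5,
    A to j = 6 and B to j = 7. *)
Definition Hvert (n : nat) := ('I_n * 'I_8)%type.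

Definition l1 : 'I_8 := inord 0.
Definition l2 : 'I_8 := inord 1.
Definition l3 : 'I_8 := inord 2.
Definition l4 : 'I_8 := inord 3.
Definition l5 : 'I_8 := inord 4.
Definition l6 : 'I_8 := inord 5.
Definition lA : 'I_8 := inord 6.
Definition lB : 'I_8 := inord 7.

Definition gadget_edge (n : nat) (k : 'I_n) (S : {set Hvert n}) : bool :=
  [|| S == [set (k, l1); (k, l2)], S == [set (k, l2); (k, l3)],
      S == [set (k, l3); (k, l6)], S == [set (k, l1); (k, l4)],
      S == [set (k, l4); (k, l5)], S == [set (k, l5); (k, l6)],
      S == [set (k, lA); (k, lB)], S == [set (k, l1); (k, lB)],
      S == [set (k, l2); (k, lB)], S == [set (k, l4); (k, lA)],
      S == [set (k, l4); (k, lB)], S == [set (k, l2); (k, lA); (k, lB)]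
    | S == [set (k, l4); (k, lA); (k, lB)]].

Definition H_edge (n : nat) : pred {set Hvert n} := fun S =>
  [||
      [exists v : Hvert n, S == [set v]],
      [exists k : 'I_n, gadget_edge k S],
      (* (iii) {(k,6),(k-1,1)}, 2<=k<=n: k1 encodes k, k2 encodes k-1 *)
      [exists k1 : 'I_n, exists k2 : 'I_n,
         (val k1 == (val k2).+1) && (S == [set (k1, l6); (k2, l1)])],
      [exists k1 : 'I_n, exists k2 : 'I_n,
         (val k1 == (val k2).+1) && (S == [set (k2, lB); (k1, lA)])]
    |
      [exists k : 'I_n, (val k == 0) && (S == [set (k, l6); (k, lA)])]].

(* Main.v *)
Require Import Defs.
From mathcomp Require Import all_boot.
From mathcomp Require Import zify.
From Stdlib Require Import Classical.
Set Implicit Arguments. Unset Strict Implicit. Unset Printing Implicit Defensive.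


Definition cvx (P : nat -> Prop) := forall i j l, i <= l -> l <= j -> P i -> P j -> P l.

Lemma cross (P1 P2 P4 PA : nat -> Prop) a b c d :
  cvx P1 -> cvx P2 -> cvx P4 -> cvx PA ->
  P1 a -> P2 a -> P1 b -> P4 b -> PA c -> P2 c -> PA d -> P4 d ->
  (forall t, P2 t -> P4 t -> False) -> exists t, P1 t /\ PA t.
Proof.
move=> c1 c2 c4 cA P1a P2a P1b P4b PAc P2c PAd P4d N.
have cv : forall P, cvx P -> forall i j l, P i -> P j -> (i <= l <= j) || (j <= l <= i) -> P l.
  move=> P cP i j l Pi Pj /orP[/andP[h1 h2]|/andP[h1 h2]]; [exact: (cP i j)|exact: (cP j i)].
case H1: ((a <= c <= b) || (b <= c <= a)); first by exists c; split=> //; exact: (cv _ c1 a b).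
case H2: ((a <= d <= b) || (b <= d <= a)); first by exists d; split=> //; exact: (cv _ c1 a b).
case H3: ((c <= a <= d) || (d <= a <= c)); first by exists a; split=> //; exact: (cv _ cA c d).
case H4: ((c <= b <= d) || (d <= b <= c)); first by exists b; split=> //; exact: (cv _ cA c d).
exfalso.
have [cd|dc] := leqP c d; have [ab|ba] := leqP a b.
- have [da|bc] : d < a \/ b < c by lia.
  + by apply: (N d) => //; apply: (c2 c a) => //; lia.
  + by apply: (N b) => //; apply: (c2 a c) => //; lia.
- have [da|bc] : d < b \/ a < c by lia.
  + by apply: (N d) => //; apply: (c2 c a) => //; lia.
  + by apply: (N a) => //; apply: (c4 b d) => //; lia.
- have [da|bc] : c < a \/ b < d by lia.
  + by apply: (N c) => //; apply: (c4 d b) => //; lia.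
  + by apply: (N b) => //; apply: (c2 a c) => //; lia.
- have [da|bc] : c < b \/ a < d by lia.
  + by apply: (N c) => //; apply: (c4 d b) => //; lia.
  + by apply: (N a) => //; apply: (c4 b d) => //; lia.
Qed.

Lemma bin_size (T : finType) (X : seq {set T}) v r : v \in bin X r -> r < size X.
Proof. rewrite /bin; case: ltnP => // h; by rewrite nth_default // inE. Qed.

Definition fo (T : finType) (X : seq {set T}) (v : T) := find (fun B : {set T} => v \in B) X.

Lemma fo_le (T : finType) (X : seq {set T}) v r : v \in bin X r -> fo X v <= r.
Proof.
move=> h; rewrite leqNgt; apply/negP => /(before_find set0); by rewrite -/(bin X r) h.
Qed.

Lemma fo_in (T : finType) (X : seq {set T}) v r : v \in bin X r -> v \in bin X (fo X v).
Proof.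
move=> h; rewrite /bin /fo; apply: (nth_find set0 (a := fun B : {set T} => v \in B)).
apply/hasP; exists (bin X r) => //; apply: mem_nth; exact: bin_size h.
Qed.

Lemma helly (T : finType) (X : seq {set T}) (Q : {set T}) w0 :
  (forall v r s l, r <= l -> l <= s -> s < size X ->
        v \in bin X r -> v \in bin X s -> v \in bin X l) ->
  w0 \in Q ->
  (forall u v, u \in Q -> v \in Q -> exists r, u \in bin X r /\ v \in bin X r) ->
  exists r, r < size X /\ Q \subset bin X r.
Proof.
move=> conv w0Q pw.
case: (arg_maxnP (fo X) w0Q) => w wQ wmax.
have [t [wt _]] := pw w w wQ wQ.
exists (fo X w); split; first exact: (bin_size (fo_in wt)).
apply/subsetP => u uQ.
have [t' [ut' wt']] := pw u w uQ wQ.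
apply: (conv u (fo X u) t') => //.
- exact: wmax.
- exact: fo_le.
- exact: bin_size ut'.
- exact: fo_in ut'.
Qed.

Lemma ge_H n (k : 'I_n) S : gadget_edge k S -> H_edge S.
Proof. by move=> h; rewrite /H_edge; by apply/orP; right; apply/orP; left; apply/existsP; exists k. Qed.

Lemma width_ge (T : finType) (X : seq {set T}) r : r < size X -> 4 <= #|bin X r| -> 3 <= pd_width X.
Proof.
move=> rs h; rewrite /pd_width.
have : #|bin X r| <= \max_(B <- X) #|B| by apply: leq_bigmax_seq => //; exact: mem_nth.
lia.
Qed.

Lemma lower n (k : 'I_n) X : is_path_decomposition (@H_edge n) X -> 3 <= pd_width X.
Proof.
case=> cov edg conv.
have E : forall S, H_edge S -> exists r, S \subset bin X r.
  by move=> S /edg [r [_ h]]; exists r.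
set v1 := (k, l1); set v2 := (k, l2); set v4 := (k, l4); set vA := (k, lA); set vB := (k, lB).
have [r0 s0] : exists r, [set v2; vA; vB] \subset bin X r.
  by apply: E; apply: (ge_H (k := k)); rewrite /gadget_edge; repeat (apply/orP; first [left; exact/eqP | right]); exact/eqP.
have [r1 s1] : exists r, [set v4; vA; vB] \subset bin X r.
  by apply: E; apply: (ge_H (k := k)); rewrite /gadget_edge; repeat (apply/orP; first [left; exact/eqP | right]); exact/eqP.
have [a sa] : exists r, [set v1; v2] \subset bin X r.
  by apply: E; apply: (ge_H (k := k)); rewrite /gadget_edge; repeat (apply/orP; first [left; exact/eqP | right]); exact/eqP.
have [b sb] : exists r, [set v1; v4] \subset bin X r.
  by apply: E; apply: (ge_H (k := k)); rewrite /gadget_edge; repeat (apply/orP; first [left; exact/eqP | right]); exact/eqP.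
have [e se] : exists r, [set v1; vB] \subset bin X r.
  by apply: E; apply: (ge_H (k := k)); rewrite /gadget_edge; repeat (apply/orP; first [left; exact/eqP | right]); exact/eqP.
have sub3 : forall (x y z : Hvert n) r, [set x; y; z] \subset bin X r ->
    [/\ x \in bin X r, y \in bin X r & z \in bin X r].
  by move=> x y z r /subsetP h; split; apply: h; rewrite !inE eqxx ?orbT.
have sub2 : forall (x y : Hvert n) r, [set x; y] \subset bin X r ->
    x \in bin X r /\ y \in bin X r.
  by move=> x y r /subsetP h; split; apply: h; rewrite !inE eqxx ?orbT.
case/sub3: s0 => h20 hA0 hB0; case/sub3: s1 => h41 hA1 hB1.
case/sub2: sa => h1a h2a; case/sub2: sb => h1b h4b; case/sub2: se => h1e hBe.
have fin : forall s : seq (Hvert n), uniq s -> size s = 4 ->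
  (forall u v, u \in s -> v \in s -> exists r, u \in bin X r /\ v \in bin X r) ->
  3 <= pd_width X.
  move=> [|w0 s] us ss pw //.
  have [r [rs sub]] := helly (Q := [set x in w0 :: s]) conv (w0 := w0)
    ltac:(by rewrite inE mem_head) ltac:(by move=> u v; rewrite !inE; exact: pw).
  apply: (width_ge rs); apply: leq_trans (subset_leq_card sub); by rewrite cardsE (card_uniqP us) ss.
have d : forall i j : nat, i < 8 -> j < 8 -> i != j -> (k, inord i) != (k, inord j) :> Hvert n.
  move=> i j hi hj ij; rewrite xpair_eqE negb_and; apply/orP; right.
  by apply: contra ij => /eqP/(f_equal val); rewrite /= !inordK // => ->.
case: (classic (exists t, v2 \in bin X t /\ v4 \in bin X t)) => [[t [h2t h4t]]|N].
- apply: (fin [:: v2; v4; vA; vB]) => //.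
    by rewrite /= !inE !negb_or !d.
  move=> u v; rewrite !inE => /or4P[]/eqP-> /or4P[]/eqP->;
    first [by exists r0 | by exists r1 | by exists t].
- have cv : forall v, cvx (fun t => v \in bin X t).
    move=> v i j l h1 h2 hi hj; apply: (conv v i j) => //; exact: bin_size hj.
  have [t [h1t hAt]] := cross (cv v1) (cv v2) (cv v4) (cv vA) h1a h2a h1b h4b hA0 h20 hA1 h41
    ltac:(by move=> t x y; apply: N; exists t).
  apply: (fin [:: v1; v2; vA; vB]) => //.
    by rewrite /= !inE !negb_or !d.
  move=> u v; rewrite !inE => /or4P[]/eqP-> /or4P[]/eqP->;
    first [by exists r0 | by exists a | by exists t | by exists e].
Qed.

Definition lo (k l : nat) := 6 * k + match l with
  0 => 5 | 1 => 3 | 2 => 1 | 3 => 2 | 4 => 1 | 5 => 0 | 6 => 0 | _ => 4 end.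
Definition hi (k l : nat) := 6 * k + match l with
  0 => 6 | 1 => 5 | 2 => 3 | 3 => 5 | 4 => 2 | 5 => 1 | 6 => 4 | _ => 6 end.
Definition inb (k l r : nat) := (lo k l <= r) && (r <= hi k l).

Definition fb n (r : nat) : {set Hvert n} := [set v : Hvert n | inb (val v.1) (val v.2) r].
Definition Xn n := mkseq (@fb n) (6 * n).

Lemma binX n r : r < 6 * n -> bin (Xn n) r = fb n r.
Proof. by move=> h; rewrite /bin nth_mkseq. Qed.

Lemma sizeX n : size (Xn n) = 6 * n.
Proof. by rewrite size_mkseq. Qed.

Lemma vl1 : nat_of_ord l1 = 0. Proof. by rewrite /l1 inordK. Qed.
Lemma vl2 : nat_of_ord l2 = 1. Proof. by rewrite /l2 inordK. Qed.
Lemma vl3 : nat_of_ord l3 = 2. Proof. by rewrite /l3 inordK. Qed.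
Lemma vl4 : nat_of_ord l4 = 3. Proof. by rewrite /l4 inordK. Qed.
Lemma vl5 : nat_of_ord l5 = 4. Proof. by rewrite /l5 inordK. Qed.
Lemma vl6 : nat_of_ord l6 = 5. Proof. by rewrite /l6 inordK. Qed.
Lemma vlA : nat_of_ord lA = 6. Proof. by rewrite /lA inordK. Qed.
Lemma vlB : nat_of_ord lB = 7. Proof. by rewrite /lB inordK. Qed.
Definition vlE := (vl1, vl2, vl3, vl4, vl5, vl6, vlA, vlB).

Lemma memv m (k : 'I_m.+1) (l x : 'I_8) q : q < m.+1 ->
  ((k, l) == (inord q, x)) = (nat_of_ord k == q) && (nat_of_ord l == nat_of_ord x).
Proof. by move=> h; rewrite xpair_eqE -!val_eqE /= inordK. Qed.

Definition sq m (q j : nat) : seq (Hvert m.+1) :=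
  match j with
  | 0 => [:: (inord q.-1, l1); (inord q.-1, lB); (inord q, l6); (inord q, lA)]
  | 1 => [:: (inord q, l6); (inord q, lA); (inord q, l3); (inord q, l5)]
  | 2 => [:: (inord q, lA); (inord q, l3); (inord q, l5); (inord q, l4)]
  | 3 => [:: (inord q, lA); (inord q, l3); (inord q, l4); (inord q, l2)]
  | 4 => [:: (inord q, lA); (inord q, l4); (inord q, l2); (inord q, lB)]
  | _ => [:: (inord q, l4); (inord q, l2); (inord q, lB); (inord q, l1)]
  end.

Lemma card_fb m r : r < 6 * m.+1 -> #|fb m.+1 r| <= 4.
Proof.
move=> hr.
have [q [j [hj E]]] : exists q j, j < 6 /\ r = q * 6 + j by exists (r %/ 6), (r %% 6); rewrite ltn_pmod // -divn_eq.
subst r. have hq : q < m.+1 by lia.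
have sub : fb m.+1 (q * 6 + j) \subset [set x in sq m q j].
  apply/subsetP => -[k [L hL]]; rewrite !inE /inb /lo /hi /=.
  have hq' : q.-1 < m.+1 by lia.
  have hk := ltn_ord k.
  do 6? [case: j hj hr => [|j] hj hr]; try lia; rewrite /= ?inE !memv // ?vlE /=;
  do 8? [case: L hL => [|L] hL]; try lia; move=> /= H; lia.
apply: leq_trans (subset_leq_card sub) _; rewrite cardsE.
apply: leq_trans (card_size _) _; by clear hr sub; case: j hj => [|[|[|[|[|j]]]]].
Qed.

Ltac solve_edge c := exists c; split;
  [rewrite sizeX; lia
  | rewrite binX; [|lia]; rewrite ?subUset ?sub1set !inE /inb /lo /hi /= ?vlE /=; lia].

Lemma upper m : is_path_decomposition (@H_edge m.+1) (Xn m.+1).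
Proof.
split.
- move=> [k [L hL]]; exists (lo k L); rewrite sizeX.
  have hk := ltn_ord k.
  have h5 : lo k L <= 6 * k + 5 by rewrite /lo; do 8? [case: L hL => [|L] hL]; lia.
  split; first lia.
  rewrite binX; last lia.
  by rewrite inE /inb /hi /lo /=; clear h5; do 8? [case: L hL => [|L] hL]; lia.
- move=> S /orP[/existsP[[k [L hL]] /eqP->]|/orP[/existsP[k]|/orP[|/orP[|]]]].
  + have hk := ltn_ord k.
    exists (lo k L); rewrite sizeX.
    have h5 : lo k L <= 6 * k + 5 by rewrite /lo; do 8? [case: L hL => [|L] hL]; lia.
    split; first lia.
    rewrite binX; last lia.
    by rewrite sub1set inE /inb /hi /lo /=; clear h5; do 8? [case: L hL => [|L] hL]; lia.
  + have hk := ltn_ord k.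
    rewrite /gadget_edge.
    move=> /orP[/eqP->|/orP[/eqP->|/orP[/eqP->|/orP[/eqP->|/orP[/eqP->|/orP[/eqP->|
      /orP[/eqP->|/orP[/eqP->|/orP[/eqP->|/orP[/eqP->|/orP[/eqP->|/orP[/eqP->|/eqP->]]]]]]]]]]]];
    first [solve_edge (6 * k + 1) | solve_edge (6 * k + 2) | solve_edge (6 * k + 3)
          | solve_edge (6 * k + 4) | solve_edge (6 * k + 5)].
  + move=> /existsP[k1 /existsP[k2 /andP[/eqP e /eqP->]]].
    have hk := ltn_ord k1; rewrite /= in e; solve_edge (6 * k1).
  + move=> /existsP[k1 /existsP[k2 /andP[/eqP e /eqP->]]].
    have hk := ltn_ord k1; rewrite /= in e; solve_edge (6 * k1).
  + move=> /existsP[k /andP[/eqP e /eqP->]].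
    have hk := ltn_ord k; rewrite /= in e; solve_edge 0.
- move=> v r s l h1 h2; rewrite sizeX => h3.
  rewrite !binX; try lia.
  rewrite !inE /inb; lia.
Qed.

Lemma upper_width m : pd_width (Xn m.+1) <= 3.
Proof.
rewrite /pd_width.
suff : \max_(B <- Xn m.+1) #|B| <= 4 by lia.
apply/bigmax_leqP_seq => B; rewrite /Xn /mkseq => /mapP[r]; rewrite mem_iota => hr -> _.
apply: card_fb; lia.
Qed.

Theorem proposition3p1 (n : nat) : 0 < n -> is_pathwidth (@H_edge n) 3.
Proof.
case: n => [//|m] _; split.
- exists (Xn m.+1); split; first exact: upper.
  apply/eqP; rewrite eqn_leq upper_width /=; exact: (lower ord0 (upper m)).
- move=> X hX; exact: (lower ord0 hX).
Qed.
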